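(* Let $n\geq 2$ be an integer and let $L_n$ be the $n$-element MV-chain. Then the number of $(\odot,\vee)$-derivations on $L_n$ is exactly $$|\operatorname{Der}(L_n)|=\frac{(n-1)(n+2)}{2}.$$
   Context: An MV-algebra is an algebra $(A,\oplus,{}^*,0)$ of type $(2,1,0)$ satisfying: $x\oplus(y\oplus z)=(x\oplus y)\oplus z$, $x\oplus y=y\oplus x$, $x\oplus 0=x$, $x^{**}=x$, $x\oplus 0^*=0^*$, $(x^*\oplus y)^*\oplus y=(y^*\oplus x)^*\oplus x$. Put $1=0^*$ and $x\odot y=(x^*\oplus y^* )^*$. The natural order is $x\le y$ iff $x^*\oplus y=1$; it makes $A$ a bounded distributive lattice with $x\vee y=(x\odot y^* )\oplus y$ and $x\wedge y=x\odot(x^*\oplus y)$. A $(\odot,\vee)$-derivation on an MV-algebra $A$ is a map $d:A\to A$ with $d(x\odot y)=(d(x)\odot y)\vee(x\odot d(y))$ for all $x,y\in A$; $\operatorname{Der}(A)$ denotes the set of all of them. $L_n=\{0,\frac1{n-1},\dots,\frac{n-2}{n-1},1\}\subseteq[0,1]$ with $x\oplus y=\min\{1,x+y\}$ and $x^*=1-x$ (so $x\odot y=\max\{0,x+y-1\}$). *)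

(* Defs.v *)
From mathcomp Require Import all_boot.
Set Implicit Arguments. Unset Strict Implicit. Unset Printing Implicit Defensive.

(* The n-element MV-chain L_n = {0, 1/(n-1), ..., 1}, encoded by numerators:
   the ordinal k : 'I_(n-1).+1 stands for k/(n-1). With m = n-1:
     x (+) y = min{1, x+y}   <->  minn m (x + y)
     x^*     = 1 - x         <->  m - x
     0       <->  0 *)
Definition Ln (n : nat) : finType := 'I_(n.-1).+1.

Section MVChain.
Variable n : nat.
Local Notation m := n.-1.

Definition mv_zero : Ln n := ord0.
Definition mv_oplus (x y : Ln n) : Ln n := inord (minn m (x + y)).
Definition mv_star (x : Ln n) : Ln n := inord (m - x).
Definition mv_one : Ln n := mv_star mv_zero.
Definition mv_odot (x y : Ln n) : Ln n := mv_star (mv_oplus (mv_star x) (mv_star y)).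
Definition mv_join (x y : Ln n) : Ln n := mv_oplus (mv_odot x (mv_star y)) y.

Definition is_derivation (d : {ffun Ln n -> Ln n}) : bool :=
  [forall x, forall y,
     d (mv_odot x y) == mv_join (mv_odot (d x) y) (mv_odot x (d y))].

Definition Der : {set {ffun Ln n -> Ln n}} := [set d | is_derivation d].
End MVChain.

(* Main.v *)
Require Import Defs.
From mathcomp Require Import all_boot zify.

Section S.
Variable m : nat.
Local Notation T := ('I_m.+1).

Lemma val_oplus (x y : T) : nat_of_ord (mv_oplus (n:=m.+1) x y) = minn m (x + y).
Proof. by rewrite /mv_oplus inordK // ltnS geq_minl. Qed.
Lemma val_star (x : T) : nat_of_ord (mv_star (n:=m.+1) x) = m - x.
Proof. by rewrite /mv_star inordK // ltnS leq_subr. Qed.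
Lemma val_odot (x y : T) : nat_of_ord (mv_odot (n:=m.+1) x y) = x + y - m.
Proof.
rewrite /mv_odot val_star val_oplus !val_star.
have := ltn_ord x; have := ltn_ord y; lia.
Qed.
Lemma val_join (x y : T) : nat_of_ord (mv_join (n:=m.+1) x y) = maxn x y.
Proof.
rewrite /mv_join val_oplus val_odot val_star.
have := ltn_ord x; have := ltn_ord y; lia.
Qed.

Definition gf (d : {ffun T -> T}) (k : nat) : nat := nat_of_ord (d (inord k)).

Lemma derP (d : {ffun T -> T}) :
  reflect (forall i j, i <= m -> j <= m ->
     gf d (i + j - m) = maxn (gf d i + j - m) (i + gf d j - m))
   (is_derivation (n:=m.+1) d).
Proof.
apply: (iffP forallP) => H.
- move=> i j Hi Hj; have /forallP/(_ (inord j))/eqP := H (inord i).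
  move/(congr1 (@nat_of_ord _)); rewrite val_join !val_odot !inordK //.
  move=> <-; rewrite /gf; congr (val (d _)).
  apply: (@ord_inj m.+1); rewrite val_odot !inordK //; lia.
- move=> x; apply/forallP => y; apply/eqP; apply: (@ord_inj m.+1).
  rewrite val_join !val_odot.
  have hx : (x : nat) <= m by rewrite -ltnS ltn_ord.
  have hy : (y : nat) <= m by rewrite -ltnS ltn_ord.
  have -> : mv_odot (n:=m.+1) x y = inord (x + y - m).
    apply: (@ord_inj m.+1); rewrite val_odot inordK //; lia.
  have := H x y hx hy; rewrite /gf !inord_val.
  done.
Qed.

Lemma gf_le d k : gf d k <= m.
Proof. by rewrite /gf -ltnS ltn_ord. Qed.

Lemma fwd d : 0 < m -> is_derivation (n:=m.+1) d ->
  [/\ gf d m.-1 < m, gf d m <= (gf d m.-1).+1 &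
      forall x, x < m -> gf d x = x + (gf d m.-1).+1 - m].
Proof.
move=> m0 /derP H.
set e := gf d m.-1.
have Hx : forall x, x < m -> gf d x = x + e.+1 - m.
  move=> x xm.
  have : forall k, k <= m.-1 -> gf d (m.-1 - k) = m.-1 - k + e.+1 - m.
    elim=> [|k IH] Hk.
      rewrite subn0 /e; have := gf_le d m.-1; lia.
    have := H (m.-1 - k) m.-1; rewrite IH; last lia.
    have -> : m.-1 - k + m.-1 - m = m.-1 - k.+1 by lia.
    move=> ->; try lia.
  move/(_ (m.-1 - x)); have -> : m.-1 - (m.-1 - x) = x by lia.
  by apply; lia.
have g0 : gf d 0 = 0.
  have := H 0 0; rewrite /= !sub0n add0n => ->; have := gf_le d 0; lia.
split => //.
- have := Hx 0 m0; rewrite g0; lia.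
- have := H m m.-1; rewrite -/e.
  have -> : m + m.-1 - m = m.-1 by lia.
  move=> He; have := He (leqnn _); lia.
Qed.

Lemma bwd d : 0 < m -> gf d m.-1 < m -> gf d m <= (gf d m.-1).+1 ->
  (forall x, x < m -> gf d x = x + (gf d m.-1).+1 - m) ->
  is_derivation (n:=m.+1) d.
Proof.
move=> m0 Hb Ha Hx; apply/derP => i j Hi Hj.
set e := gf d m.-1 in Hb Ha Hx *. clearbody e.
have he : e <= m by lia.
have [im|->] : i < m \/ i = m by lia.
  rewrite (Hx i im) Hx; last lia.
  have [jm|->] : j < m \/ j = m by lia.
    rewrite (Hx j jm); lia.
  lia.
have [jm|->] : j < m \/ j = m by lia.
  rewrite (Hx (m + j - m)); last lia. rewrite (Hx j jm); lia.
have -> : m + m - m = m by lia. lia.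
Qed.

Definition phi (d : {ffun T -> T}) : T * T := (d (inord m.-1), d (inord m)).
Definition S : {set T * T} := [set p : T * T | (p.1 < m) && (p.2 <= p.1 + 1)].

Lemma gfE (d : {ffun T -> T}) (x : T) : nat_of_ord (d x) = gf d x.
Proof. by rewrite /gf inord_val. Qed.

Lemma phi_inj : 0 < m -> {in Der m.+1 &, injective phi}.
Proof.
move=> m0 d1 d2; rewrite !inE => D1 D2 [E1 E2].
have [b1 a1 H1] := fwd _ m0 D1; have [b2 a2 H2] := fwd _ m0 D2.
have e1 : gf d1 m.-1 = gf d2 m.-1 by rewrite /gf E1.
have e2 : gf d1 m = gf d2 m by rewrite /gf E2.
apply/ffunP => x; apply: (@ord_inj m.+1); rewrite !gfE.
have hx : (x : nat) < m.+1 := ltn_ord x.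
have [xm|xm] : x < m \/ (x : nat) = m by lia.
  by rewrite H1 // H2 // e1.
by rewrite xm.
Qed.

Lemma imS : 0 < m -> phi @: Der m.+1 = S.
Proof.
move=> m0; apply/setP => p; rewrite inE; apply/imsetP/idP.
  move=> [d]; rewrite inE => D ->.
  have [hb ha _] := fwd _ m0 D; rewrite /=.
  by apply/andP; split; [exact: hb | rewrite addn1; exact: ha].
case: p => a b /andP [/= am ba].
pose d := [ffun x : T => if x < m then (inord (x + a.+1 - m) : T) else b].
have gx : forall x, x < m -> gf d x = x + a.+1 - m.
  move=> x xm; rewrite /gf ffunE inordK; last lia.
  rewrite xm inordK //; lia.
have ga : gf d m.-1 = a by rewrite gx; lia.
have gb : gf d m = b by rewrite /gf ffunE inordK // ltnn.
exists d.
  rewrite inE; apply: bwd => //.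
  - by rewrite ga.
  - by rewrite ga gb; rewrite addn1 in ba.
  - by move=> x xm; rewrite gx // ga.
rewrite /phi; congr pair; apply: (@ord_inj m.+1).
  by rewrite -/(gf d m.-1) ga.
by rewrite -/(gf d m) gb.
Qed.

Lemma cnt k c : \sum_(j < k) (if j <= c then 1 else 0) = minn k c.+1.
Proof.
elim: k => [|k IH]; first by rewrite big_ord0.
rewrite big_ord_recr /= IH; case: ifP => /= H; lia.
Qed.

Lemma cardS : #|S| = \sum_(i < m) i.+2.
Proof.
rewrite -sum1_card big_mkcond /=.
rewrite (eq_bigr (fun p : T * T => (fun i j => if (i, j) \in S then 1 else 0) p.1 p.2)); last by case.
rewrite -(pair_bigA _ (fun i j => if (i, j) \in S then 1 else 0)) /=.
rewrite big_ord_recr /= [X in _ + X = _]big1; last first.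
  by move=> j _; rewrite inE /= ltnn.
rewrite addn0; apply: eq_bigr => i _.
rewrite (eq_bigr (fun j : T => if j <= i.+1 then 1 else 0)); last first.
  by move=> j _; rewrite inE /= ltn_ord addn1.
rewrite cnt; have := ltn_ord i; lia.
Qed.
End S.

Lemma sumF m : (\sum_(i < m) i.+2) * 2 = m * (m + 3).
Proof.
elim: m => [|m IH]; first by rewrite big_ord0.
rewrite big_ord_recr /= mulnDl IH; lia.
Qed.

Theorem theorem3p11 (n : nat) (hn : 2 <= n) :
  #|Der n| = ((n - 1) * (n + 2)) %/ 2.
Proof.
case: n hn => [//|m] hm; have m0 : 0 < m by [].
rewrite -(card_in_imset (@phi_inj m m0)) (@imS m m0) cardS.
have -> : (m.+1 - 1) * (m.+1 + 2) = (\sum_(i < m) i.+2) * 2 by rewrite sumF; lia.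
by rewrite mulnK.
Qed.
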